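(* Let $(\mathcal{S},\mathcal{A},P,r,\gamma)$ be a finite discounted MDP, let $\pi$ be a policy with advantage function $A^\pi$, fix a state $s\in\mathcal{S}$ and a scalar $\eta_s>0$. Define $\pi^+_s(\eta_s) := \operatorname{Proj}_{\Delta(\mathcal{A})}\big(\pi_s + \eta_s A^\pi_{s,\cdot}\big)$ and $f_s(\eta_s) := \sum_{a\in\mathcal{A}} \pi^+_{s,a}(\eta_s)\, A^\pi_{s,a}$. Then $$f_s(\eta_s) \ge \frac{\big(\max_{a\in\mathcal{A}} A^\pi_{s,a}\big)^2}{\max_{a\in\mathcal{A}} A^\pi_{s,a} + \frac{2+5|\mathcal{A}|}{\eta_s}}.$$
   Context: A finite discounted MDP has finite state space $\mathcal{S}$, finite action space $\mathcal{A}$, transition kernel $P$, reward $r:\mathcal{S}\times\mathcal{A}\to[0,1]$ and discount $\gamma\in[0,1)$. A (stationary stochastic) policy $\pi$ assigns to each state $s$ a distribution $\pi_s=(\pi_{s,a})_{a\in\mathcal{A}}\in\Delta(\mathcal{A})$ (the probability simplex). $V^\pi(s)=\mathbb{E}[\sum_{t\ge0}\gamma^t r(s_t,a_t)\mid s_0=s]$ with $a_t\sim\pi_{s_t}$, $s_{t+1}\sim P(\cdot\mid s_t,a_t)$; $Q^\pi(s,a)$ is defined analogously with $a_0=a$; the advantage is $A^\pi_{s,a}=Q^\pi(s,a)-V^\pi(s)$. $\operatorname{Proj}_{\Delta(\mathcal{A})}$ denotes Euclidean projection onto the probability simplex. *)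

(* Defs.v *)
From HB Require Import structures.
From mathcomp Require Import all_boot all_order all_algebra.
From mathcomp Require Import all_classical all_reals all_analysis.
Set Implicit Arguments. Unset Strict Implicit. Unset Printing Implicit Defensive.
Import Order.TTheory GRing.Theory Num.Theory.
Local Open Scope ring_scope.

Section MDP.
Variables (R : realType) (S A : finType).

Definition is_distr (T : finType) (p : T -> R) : Prop :=
  (forall x, 0 <= p x) /\ \sum_(x : T) p x = 1.

Definition is_MDP (P : S -> A -> S -> R) (r : S -> A -> R) (gamma : R) : Prop :=
  (forall s a, is_distr (P s a)) /\ (forall s a, 0 <= r s a <= 1) /\
  0 <= gamma < 1.

Definition is_policy (pi : S -> A -> R) : Prop := forall s, is_distr (pi s).

Variables (P : S -> A -> S -> R) (r : S -> A -> R) (gamma : R) (pi : S -> A -> R).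

(* expected reward r(s_t,a_t) at time t, starting from s_0 = s, actions ~ pi *)
Fixpoint exp_rew (t : nat) (s : S) : R :=
  match t with
  | 0 => \sum_(a : A) pi s a * r s a
  | t'.+1 => \sum_(a : A) pi s a * \sum_(s' : S) P s a s' * exp_rew t' s'
  end.

(* expected reward at time t, starting from s_0 = s, a_0 = a, then following pi *)
Definition exp_rew_Q (t : nat) (s : S) (a : A) : R :=
  match t with
  | 0 => r s a
  | t'.+1 => \sum_(s' : S) P s a s' * exp_rew t' s'
  end.

Definition Vpi (s : S) : R :=
  limn (fun N => \sum_(0 <= t < N) gamma ^+ t * exp_rew t s).

Definition Qpi (s : S) (a : A) : R :=
  limn (fun N => \sum_(0 <= t < N) gamma ^+ t * exp_rew_Q t s a).

Definition Adv (s : S) (a : A) : R := Qpi s a - Vpi s.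

End MDP.

Definition in_simplex (R : realType) (A : finType) (p : A -> R) : Prop :=
  is_distr p.

Definition is_proj_simplex (R : realType) (A : finType) (y p : A -> R) : Prop :=
  in_simplex p /\
  forall q : A -> R, in_simplex q ->
    \sum_(a : A) (y a - p a) ^+ 2 <= \sum_(a : A) (y a - q a) ^+ 2.

(* Main.v *)
Require Import Defs.
From HB Require Import structures.
From mathcomp Require Import all_boot all_order all_algebra.
From mathcomp Require Import all_classical all_reals all_analysis.
From mathcomp Require Import ring lra.
Import Order.TTheory GRing.Theory Num.Theory.
Set Implicit Arguments. Unset Strict Implicit. Unset Printing Implicit Defensive.
Local Open Scope ring_scope.

Lemma distr_le1 (R : realType) (T : finType) (w : T -> R) x :
  is_distr w -> w x <= 1.
Proof.
move=> [w0 <-]; rewrite (bigD1 x) //= lerDl.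
by apply: sumr_ge0 => y _.
Qed.

Lemma sum_delta (R : realType) (T : finType) (z : T -> R) b :
  \sum_x z x * (x == b)%:R = z b.
Proof.
rewrite (bigD1 b) //= eqxx mulr1 big1 ?addr0 // => x /negbTE ->.
by rewrite mulr0.
Qed.

Lemma sum_delta1 (R : realType) (T : finType) b :
  \sum_(x : T) (x == b)%:R = 1 :> R.
Proof.
by rewrite (bigD1 b) //= eqxx big1 ?addr0 // => x /negbTE ->.
Qed.

Lemma proj_VI (R : realType) (A : finType) (y p q : A -> R) :
  is_proj_simplex y p -> in_simplex q ->
  \sum_a (y a - p a) * (q a - p a) <= 0.
Proof.
move=> [[p0 p1] Hmin] [q0 q1].
set X := \sum_a _.
set W := \sum_a (q a - p a) ^+ 2.
have W0 : 0 <= W by apply: sumr_ge0 => a _; exact: sqr_ge0.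
have key : forall t, 0 < t <= 1 -> 2 * t * X <= t ^+ 2 * W.
  move=> t /andP[t0 t1].
  have Hq : in_simplex (fun a => p a + t * (q a - p a)).
    split.
      move=> a; have := p0 a; have := q0 a.
      have -> : p a + t * (q a - p a) = (1 - t) * p a + t * q a by ring.
      move=> h1 h2; apply: addr_ge0; apply: mulr_ge0 => //; lra.
    rewrite big_split /= -mulr_sumr sumrB p1 q1 subrr mulr0 addr0 //.
  have := Hmin _ Hq.
  have -> : \sum_a (y a - (p a + t * (q a - p a))) ^+ 2 =
     \sum_a (y a - p a) ^+ 2 - 2 * t * X + t ^+ 2 * W.
    rewrite /X /W mulr_sumr mulr_sumr -sumrB -big_split /=.
    by apply: eq_bigr => a _; ring.
  lra.
rewrite leNgt; apply/negP => X0.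
have tpos : 0 < X / (X + W) by apply: divr_gt0 => //; lra.
have tle1 : X / (X + W) <= 1 by rewrite ler_pdivrMr; lra.
have := key _ (introT andP (conj tpos tle1)).
set t := X / (X + W).
have -> : t ^+ 2 * W = t * (t * W) by ring.
have tW : t * (X + W) = X by rewrite /t mulfVK //; lra.
move=> h.
have h2 : 2 * X <= t * W.
  have e : 2 * t * X = t * (2 * X) by ring.
  by rewrite e ler_pM2l // in h.
nra.
Qed.

Lemma core (R : realType) (A : finType) (pi Adv p : A -> R) (eta M : R) :
  is_distr pi -> 0 < eta ->
  is_proj_simplex (fun a => pi a + eta * Adv a) p ->
  (exists a, Adv a = M) -> (forall a, Adv a <= M) ->
  \sum_a pi a * Adv a = 0 ->
  \sum_a p a * Adv a >= M ^+ 2 / (M + (2 + 5 * #|A|%:R) / eta).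
Proof.
move=> Hpi eta0 Hp [b Hb] HM Hsum0.
have [[p0 p1] _] := Hp.
have [pi0 pi1] := Hpi.
set f := \sum_a p a * Adv a.
set n : R := #|A|%:R.
have n1 : 1 <= n.
  rewrite /n (_ : 1 = 1%:R) // ler_nat; apply/card_gt0P; by exists b.
have M0 : 0 <= M.
  rewrite -Hsum0 -[M]mul1r -pi1 mulr_suml; apply: ler_sum => a _.
  by rewrite ler_wpM2l.
set m := eta * M.
set F := eta * f.
set D := \sum_a (p a - pi a) ^+ 2.
have hD : D <= F.
  have := proj_VI Hp Hpi.
  have -> : \sum_a (pi a + eta * Adv a - p a) * (pi a - p a) =
      D + eta * \sum_a pi a * Adv a - F.
    rewrite /D /F /f !mulr_sumr -big_split -sumrB /=.
    by apply: eq_bigr => a _; ring.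
  rewrite Hsum0 mulr0 addr0 subr_le0 //.
have F0 : 0 <= F by apply: le_trans hD; apply: sumr_ge0 => a _; exact: sqr_ge0.
set e := fun x : A => (x == b)%:R : R.
have He : in_simplex e.
  split; first by move=> x; rewrite /e ler0n.
  exact: sum_delta1.
set X := \sum_a (p a - pi a) * (e a - p a).
have hX : m - F <= X.
  have := proj_VI Hp He.
  have -> : \sum_a (pi a + eta * Adv a - p a) * (e a - p a) =
      eta * \sum_a Adv a * e a - F - X.
    rewrite /X /F /f !mulr_sumr -sumrB -sumrB /=.
    by apply: eq_bigr => a _; ring.
  rewrite /e sum_delta Hb -/m; lra.
set W := \sum_a (e a - p a) ^+ 2.
have hW : W <= 2.
  have -> : W = 1 - 2 * p b + \sum_a (p a) ^+ 2.
    rewrite /W.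
    have -> : \sum_a (e a - p a) ^+ 2 =
       \sum_a e a - 2 * \sum_a p a * e a + \sum_a p a ^+ 2.
      rewrite mulr_sumr -sumrB -big_split /=; apply: eq_bigr => a _.
      rewrite /e; case: (a == b) => /=; ring.
    by rewrite sum_delta1 sum_delta.
  have : \sum_a p a ^+ 2 <= 1.
    rewrite -p1; apply: ler_sum => a _.
    by rewrite expr2 ler_piMr // distr_le1.
  have := p0 b; lra.
have hmX : 4 * m * X <= 4 * D + m ^+ 2 * W.
  rewrite /X /D /W !mulr_sumr -big_split /=; apply: ler_sum => a _.
  set u := p a - pi a; set w := e a - p a.
  have : 0 <= (2 * u - m * w) ^+ 2 by exact: sqr_ge0.
  move=> h; nra.
(* exchange step *)
have hL : m - 2 <= F.
  have exch : forall x, 0 < p x ->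
      pi b + eta * M - p b <= pi x + eta * Adv x - p x.
    move=> x px.
    set q := fun a => p a + p x * (e a - (a == x)%:R).
    have Hq : in_simplex q.
      split.
        move=> a; rewrite /q /e.
        have := p0 a.
        have := ltW px.
        case: (eqVneq a x) => [->|ax].
          by case: (x == b) => /=; rewrite ?mulr1n ?mulr0n; lra.
        by case: (a == b) => /=; rewrite ?mulr1n ?mulr0n; lra.
      rewrite /q big_split /= -mulr_sumr sumrB sum_delta1 sum_delta1 subrr.
      by rewrite mulr0 addr0.
    have := proj_VI Hp Hq.
    have -> : \sum_a (pi a + eta * Adv a - p a) * (q a - p a) =
       p x * (\sum_a (pi a + eta * Adv a - p a) * e a
              - \sum_a (pi a + eta * Adv a - p a) * (a == x)%:R).
      rewrite -sumrB mulr_sumr; apply: eq_bigr => a _; rewrite /q; ring.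
    rewrite /e !sum_delta Hb.
    move=> h; rewrite -subr_le0.
    have : p x * ((pi b + eta * M - p b) - (pi x + eta * Adv x - p x)) <= 0 by [].
    by rewrite pmulr_rle0.
  rewrite /F /f mulr_sumr.
  have -> : m - 2 = \sum_a p a * (m - 2) by rewrite -mulr_suml p1 mul1r.
  apply: ler_sum => a _.
  have := p0 a; rewrite le0r => /orP[/eqP ->|pa]; first by rewrite !mul0r mulr0.
  have := exch a pa.
  have := pi0 b; have := distr_le1 b (conj p0 p1); have := distr_le1 a Hpi.
  move=> h1 h2 h3 h4.
  have : m - 2 <= eta * Adv a by rewrite /m; lra.
  move=> h5; have : p a * (m - 2) <= p a * (eta * Adv a) by rewrite ler_pM2l.
  move=> h6; rewrite mulrCA; lra.
set c := 2 + 5 * n.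
have c0 : 0 < c by rewrite /c; lra.
set k := c / eta.
have ek : eta * k = c by rewrite /k mulrCA mulfV ?gt_eqF // mulr1.
have k0 : 0 < k by rewrite /k divr_gt0.
have main : m ^+ 2 <= F * (m + c).
  have m0 : 0 <= m by rewrite /m mulr_ge0 // ltW.
  have [m3|m3] := lerP m 3.
    have : m ^+ 2 <= 2 * F * (1 + m).
      have h1 : m * (m - F) <= m * X by rewrite ler_wpM2l.
      have h2 : m ^+ 2 * W <= m ^+ 2 * 2 by rewrite ler_wpM2l ?sqr_ge0.
      nra.
    have cm : 0 <= c - 2 - m by rewrite /c; lra.
    have := mulr_ge0 F0 cm; nra.
  have c6 : 6 <= c by rewrite /c; lra.
  have Fm : 0 <= m - 2 by lra.
  have h1 : (m - 2) * (m + c) <= F * (m + c) by rewrite ler_wpM2r //; lra.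
  have h2 : 0 <= (m - 3) * (c - 6) by apply: mulr_ge0; lra.
  nra.
rewrite ler_pdivrMr; last lra.
have e2 : 0 < eta ^+ 2 by rewrite exprn_gt0.
rewrite -(ler_pM2l e2).
have -> : eta ^+ 2 * M ^+ 2 = m ^+ 2 by rewrite /m; ring.
have -> : eta ^+ 2 * (f * (M + k)) = F * (m + c) by rewrite /F /m -ek; ring.
exact: main.
Qed.
Lemma distr_avg01 (R : realType) (T : finType) (w f : T -> R) :
  is_distr w -> (forall x, 0 <= f x <= 1) -> 0 <= \sum_x w x * f x <= 1.
Proof.
move=> [w0 w1] f01; apply/andP; split.
  by apply: sumr_ge0 => x _; apply: mulr_ge0 => //; case/andP: (f01 x).
rewrite -w1; apply: ler_sum => x _.
by rewrite ler_piMr //; case/andP: (f01 x).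
Qed.

Lemma exp_rew01 (R : realType) (S A : finType) P r (gamma : R) pi :
  is_MDP P r gamma -> is_policy pi ->
  forall t s, 0 <= @exp_rew R S A P r pi t s <= 1.
Proof.
move=> [HP [Hr _]] Hpi; elim=> [|t IH] s /=.
  exact: distr_avg01.
apply: distr_avg01 => // a; exact: distr_avg01.
Qed.

Lemma geom_bound (R : realType) (g : R) (N : nat) : 0 <= g < 1 ->
  \sum_(0 <= t < N) g ^+ t <= (1 - g)^-1.
Proof.
move=> /andP[g0 g1].
have H : (1 - g) * \sum_(0 <= t < N) g ^+ t = 1 - g ^+ N.
  elim: N => [|N IH]; first by rewrite big_geq // mulr0 expr0 subrr.
  rewrite big_nat_recr //= mulrDr IH exprS; ring.
have g1' : 0 < 1 - g by rewrite subr_gt0.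
rewrite -(ler_pM2l g1') H mulfV ?gt_eqF //.
by rewrite lerBlDr lerDl exprn_ge0.
Qed.

Lemma Q_cvg (R : realType) (S A : finType) P r (gamma : R) pi s a :
  is_MDP P r gamma -> is_policy pi ->
  cvgn (fun N => \sum_(0 <= t < N) gamma ^+ t * @exp_rew_Q R S A P r pi t s a).
Proof.
move=> HM Hpi.
have e01 : forall t, 0 <= exp_rew_Q P r pi t s a <= 1.
  case=> [|t] /=; first by case: HM => _ [Hr _]; exact: Hr.
  apply: distr_avg01; first by case: HM => HP _; exact: HP.
  move=> s'; exact: (exp_rew01 HM Hpi).
have [g0 g1] : 0 <= gamma /\ gamma < 1 by case: HM => _ [_ /andP[]].
apply: nondecreasing_is_cvgn.
  move=> n m nm; rewrite (big_cat_nat (leq0n n) nm) /= lerDl.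
  by apply: sumr_ge0 => t _; apply: mulr_ge0; [exact: exprn_ge0|case/andP: (e01 t)].
exists (1 - gamma)^-1 => _ [N _ <-].
apply: le_trans (geom_bound N _); last by rewrite g0 g1.
apply: ler_sum => t _; rewrite ler_piMr ?exprn_ge0 //; by case/andP: (e01 t).
Qed.

Lemma Adv_avg0 (R : realType) (S A : finType) P r (gamma : R) pi s :
  is_MDP P r gamma -> is_policy pi ->
  \sum_a pi s a * @Adv R S A P r gamma pi s a = 0.
Proof.
move=> HM Hpi.
have EV : Vpi P r gamma pi s = \sum_a pi s a * Qpi P r gamma pi s a.
  rewrite /Vpi.
  have -> : (fun N => \sum_(0 <= t < N) gamma ^+ t * exp_rew P r pi t s) =
     (fun N => \sum_a pi s a * \sum_(0 <= t < N) gamma ^+ t * exp_rew_Q P r pi t s a).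
    apply: funext => N.
    under eq_bigr => t _.
      have -> : exp_rew P r pi t s = \sum_a pi s a * exp_rew_Q P r pi t s a.
        by case: t.
      rewrite mulr_sumr; over.
    rewrite exchange_big /=; apply: eq_bigr => a _.
    rewrite mulr_sumr; apply: eq_bigr => t _; ring.
  set f := (fun N : nat => _). set l := (\sum_a _). have H := @cvg_lim _ _ nat eventually _ f l. apply: H => //. rewrite /f /l.
  apply: cvg_big => //.
    exact: add_continuous.
  move=> a _; apply: cvgMl_tmp.
  exact: (Q_cvg (s:=s) (a:=a) HM Hpi).
case: (Hpi s) => _ H1.
rewrite /Adv; under eq_bigr => a _ do rewrite mulrBr.
by rewrite sumrB -EV -mulr_suml H1 mul1r subrr.
Qed.

Unset Implicit Arguments.
Theorem mainTheorem2 (R : realType) (S A : finType)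
    (P : S -> A -> S -> R) (r : S -> A -> R) (gamma : R) (pi : S -> A -> R)
    (s : S) (eta : R) (piplus : A -> R) (Amax : R) :
  is_MDP P r gamma ->
  is_policy pi ->
  0 < eta ->
  (* piplus = Proj_{Delta(A)} (pi_s + eta * A^pi_{s,.}) *)
  is_proj_simplex (fun a => pi s a + eta * Adv P r gamma pi s a) piplus ->
  (* Amax = max_a A^pi_{s,a} *)
  (exists a, Adv P r gamma pi s a = Amax) ->
  (forall a, Adv P r gamma pi s a <= Amax) ->
  \sum_(a : A) piplus a * Adv P r gamma pi s a >=
    Amax ^+ 2 / (Amax + (2 + 5 * #|A|%:R) / eta).
Proof.
move=> HM Hpi eta0 Hp Hb HA.
exact: (@core R A (pi s) (Adv P r gamma pi s) piplus eta Amax (Hpi s) eta0 Hp Hb HA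
  (Adv_avg0 s HM Hpi)).
Qed.
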